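(* Let ${\mathbf{X}}={\mathbf{U}}_0{\mathbf{V}}_0^T$ with ${\mathbf{U}}_0\in\mathbb{R}_+^{m\times r}$, ${\mathbf{V}}_0\in\mathbb{R}_+^{n\times r}$ of full column rank $r\le\min\{m,n\}$. Let ${\mathbf{A}}_1\in\mathbb{R}^{r\times m}$, ${\mathbf{A}}_2\in\mathbb{R}^{n\times r}$ be such that ${\mathbf{A}}_1{\mathbf{X}}{\mathbf{A}}_2$ is invertible. Let $\lambda_1,\lambda_2>0$, $\sigma_1,\sigma_2\ge0$, and let $(\tilde{\mathbf{U}},\tilde{\mathbf{V}})$ be any minimizer over ${\mathbf{U}}\in\mathbb{R}_+^{m\times r},{\mathbf{V}}\in\mathbb{R}_+^{n\times r}$ of $$L({\mathbf{U}},{\mathbf{V}})+\sigma_1\|\mathbf{1}_m^T({\mathbf{X}}-{\mathbf{U}}{\mathbf{V}}^T)\|_2^2+\sigma_2\|({\mathbf{X}}-{\mathbf{U}}{\mathbf{V}}^T)\mathbf{1}_n\|_2^2,$$ where $L({\mathbf{U}},{\mathbf{V}})=\|{\mathbf{A}}_1({\mathbf{X}}-{\mathbf{U}}{\mathbf{V}}^T)\|_F^2+\|({\mathbf{X}}-{\mathbf{U}}{\mathbf{V}}^T){\mathbf{A}}_2\|_F^2+\lambda_1\|({\mathbf{I}}_m-\mathbf{P}_1){\mathbf{U}}{\mathbf{V}}^T\|_F^2+\lambda_2\|{\mathbf{U}}{\mathbf{V}}^T({\mathbf{I}}_n-\mathbf{P}_2)\|_F^2$, with $\mathbf{P}_1$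 the orthogonal projection onto the column space of ${\mathbf{X}}{\mathbf{A}}_2$ and $\mathbf{P}_2$ the orthogonal projection onto the row space of ${\mathbf{A}}_1{\mathbf{X}}$. Then ${\mathbf{X}}=\tilde{\mathbf{U}}\tilde{\mathbf{V}}^T$.
   Context: $\mathbb{R}_+^{a\times b}$ denotes the set of $a\times b$ entrywise nonnegative matrices; $\mathbf{1}_m\in\mathbb{R}^m$ is the all-ones vector. $\|\cdot\|_F$ is the Frobenius norm and $\|\cdot\|_2$ the Euclidean norm. *)

(* Defs.v *)
From HB Require Import structures.
From mathcomp Require Import all_boot all_order all_algebra.
From mathcomp Require Import reals.
Set Implicit Arguments. Unset Strict Implicit. Unset Printing Implicit Defensive.
Import Order.TTheory GRing.Theory Num.Theory.
Local Open Scope ring_scope.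

Definition nonneg_mx (R : realType) (a b : nat) (A : 'M[R]_(a, b)) : Prop :=
  forall i j, 0 <= A i j.

(* squared Frobenius norm (= squared Euclidean norm for row/column vectors) *)
Definition frob2 (R : realType) (a b : nat) (A : 'M[R]_(a, b)) : R :=
  \sum_(i < a) \sum_(j < b) A i j ^+ 2.

(* P is the orthogonal projection onto the column space of M:
   P symmetric, idempotent, and its column space equals that of M
   (column space of M = row space of M^T). *)
Definition orth_proj_col (R : realType) (a k : nat) (P : 'M[R]_a) (M : 'M[R]_(a, k)) : Prop :=
  [/\ P^T = P, P *m P = P & (P^T == M^T)%MS].

Definition orth_proj_row (R : realType) (k a : nat) (P : 'M[R]_a) (M : 'M[R]_(k, a)) : Prop :=
  [/\ P^T = P, P *m P = P & (P == M)%MS].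

Definition objective (R : realType) (m n r : nat)
  (X : 'M[R]_(m, n)) (A1 : 'M[R]_(r, m)) (A2 : 'M[R]_(n, r))
  (P1 : 'M[R]_m) (P2 : 'M[R]_n) (lam1 lam2 sig1 sig2 : R)
  (U : 'M[R]_(m, r)) (V : 'M[R]_(n, r)) : R :=
  let E := X - U *m V^T in
  frob2 (A1 *m E) + frob2 (E *m A2)
  + lam1 * frob2 ((1%:M - P1) *m (U *m V^T))
  + lam2 * frob2 ((U *m V^T) *m (1%:M - P2))
  + sig1 * frob2 ((const_mx 1 : 'M[R]_(1, m)) *m E)
  + sig2 * frob2 (E *m (const_mx 1 : 'M[R]_(n, 1))).

(* Main.v *)
Require Import Defs.
From HB Require Import structures.
From mathcomp Require Import all_boot all_order all_algebra.
From mathcomp Require Import reals.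
From mathcomp.algebra_tactics Require Import lra.
Import Order.TTheory GRing.Theory Num.Theory.
Local Open Scope ring_scope.

Lemma frob2_ge0 (R : realType) (a b : nat) (A : 'M[R]_(a, b)) : 0 <= frob2 A.
Proof. by apply: sumr_ge0 => i _; apply: sumr_ge0 => j _; apply: sqr_ge0. Qed.

Lemma frob2_0 (R : realType) (a b : nat) : frob2 (0 : 'M[R]_(a, b)) = 0.
Proof. by apply: big1 => i _; apply: big1 => j _; rewrite mxE expr0n. Qed.

Lemma frob2_eq0 (R : realType) (a b : nat) (A : 'M[R]_(a, b)) :
  frob2 A = 0 -> A = 0.
Proof.
move=> h; apply/matrixP => i j; rewrite mxE.
have hi := @psumr_eq0P _ _ _ _ (fun i _ => sumr_ge0 _ (fun j _ => sqr_ge0 (A i j))) h i isT.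
have := @psumr_eq0P _ _ _ _ (fun j _ => sqr_ge0 (A i j)) hi j isT.
by move/eqP; rewrite sqrf_eq0 => /eqP.
Qed.

Lemma sub_rank (F : fieldType) (m1 m2 k : nat) (A : 'M[F]_(m1, k)) (B : 'M[F]_(m2, k)) :
  (A <= B)%MS -> (\rank B <= \rank A)%N -> (B <= A)%MS.
Proof.
move=> sAB hr; have h := mxrank_leqif_sup sAB.
rewrite -h.2; rewrite eqn_leq hr andbT; exact: h.1.
Qed.

Theorem mainTheorem5 (R : realType) (m n r : nat)
  (U0 : 'M[R]_(m, r)) (V0 : 'M[R]_(n, r))
  (A1 : 'M[R]_(r, m)) (A2 : 'M[R]_(n, r))
  (P1 : 'M[R]_m) (P2 : 'M[R]_n)
  (lam1 lam2 sig1 sig2 : R)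
  (Ut : 'M[R]_(m, r)) (Vt : 'M[R]_(n, r)) :
  nonneg_mx U0 -> nonneg_mx V0 ->
  \rank U0 = r -> \rank V0 = r -> (r <= minn m n)%N ->
  A1 *m (U0 *m V0^T) *m A2 \in unitmx ->
  0 < lam1 -> 0 < lam2 -> 0 <= sig1 -> 0 <= sig2 ->
  orth_proj_col P1 ((U0 *m V0^T) *m A2) ->
  orth_proj_row P2 (A1 *m (U0 *m V0^T)) ->
  nonneg_mx Ut -> nonneg_mx Vt ->
  (forall (U : 'M[R]_(m, r)) (V : 'M[R]_(n, r)), nonneg_mx U -> nonneg_mx V ->
     objective (U0 *m V0^T) A1 A2 P1 P2 lam1 lam2 sig1 sig2 Ut Vt
     <= objective (U0 *m V0^T) A1 A2 P1 P2 lam1 lam2 sig1 sig2 U V) ->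
  U0 *m V0^T = Ut *m Vt^T.
Proof.
move=> nU0 nV0 _ _ _ Ku l1 l2 s1 s2 [P1s P1i P1e] [P2s P2i P2e] nUt nVt hmin.
set X := U0 *m V0^T in Ku P1e P2e hmin *.
set Y := Ut *m Vt^T.
set K := A1 *m X *m A2 in Ku.
have rK : \rank K = r by rewrite (mxrank_unit Ku).
have rX : (\rank X <= r)%N.
  by apply: leq_trans (mxrankM_maxr _ _) (rank_leq_row _).
have sXA : (X^T <= A2^T *m X^T)%MS.
  apply: sub_rank; first exact: submxMl.
  rewrite mxrank_tr -trmx_mul mxrank_tr.
  apply: leq_trans rX _; rewrite -{1}rK /K -mulmxA; exact: mxrankM_maxr.
have sXB : (X <= A1 *m X)%MS.
  apply: sub_rank; first exact: submxMl.
  apply: leq_trans rX _; rewrite -{1}rK /K; exact: mxrankM_maxl.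
case/andP: P1e => P1a P1b.
case/andP: P2e => P2a P2b.
have P1X : P1 *m X = X.
  have : (X^T <= P1^T)%MS by apply: submx_trans sXA _; rewrite -trmx_mul.
  case/submxP => D hD.
  have -> : X = P1 *m D^T by rewrite -[X]trmxK hD trmx_mul trmxK.
  by rewrite mulmxA P1i.
have XP2 : X *m P2 = X.
  have : (X <= P2)%MS by apply: submx_trans sXB _.
  case/submxP => D ->.
  by rewrite -mulmxA P2i.
have [S hS] : exists S : 'M[R]_(r, m), P1 = X *m A2 *m S.
  case/submxP: P1a => D hD; exists D^T.
  by rewrite -[P1]trmxK hD trmx_mul trmxK.
have obj0 : objective X A1 A2 P1 P2 lam1 lam2 sig1 sig2 U0 V0 = 0.
  rewrite /objective -/X subrr !(mulmx0, mul0mx) frob2_0.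
  rewrite mulmxBl mul1mx P1X subrr mulmxBr mulmx1 XP2 subrr frob2_0.
  by rewrite !frob2_0 !mulr0 !addr0.
have := hmin U0 V0 nU0 nV0; rewrite obj0 /objective -/Y.
set a := frob2 (A1 *m (X - Y)).
set b := frob2 ((X - Y) *m A2).
set c := frob2 ((1%:M - P1) *m Y).
set d := frob2 (Y *m (1%:M - P2)).
set e := frob2 (const_mx 1 *m (X - Y)).
set f := frob2 ((X - Y) *m const_mx 1).
have ha : 0 <= a := frob2_ge0 _ _ _ _.
have hb : 0 <= b := frob2_ge0 _ _ _ _.
have hc : 0 <= lam1 * c by rewrite mulr_ge0 ?frob2_ge0 // ltW.
have hd : 0 <= lam2 * d by rewrite mulr_ge0 ?frob2_ge0 // ltW.
have he : 0 <= sig1 * e by rewrite mulr_ge0 ?frob2_ge0.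
have hf : 0 <= sig2 * f by rewrite mulr_ge0 ?frob2_ge0.
move=> hle.
have a0 : a = 0 by lra.
have c0 : lam1 * c = 0 by lra.
move: c0 => /eqP; rewrite mulf_eq0 (gt_eqF l1) /= => /eqP /frob2_eq0 c0.
move: a0 => /frob2_eq0 /eqP; rewrite mulmxBr subr_eq0 => /eqP a0.
move: c0 => /eqP; rewrite mulmxBl mul1mx subr_eq0 => /eqP c0.
have eK : forall Z : 'M[R]_(m, n), K *m (S *m Z) = A1 *m (P1 *m Z).
  by move=> Z; rewrite hS /K !mulmxA.
have h1 : K *m (S *m Y) = A1 *m X by rewrite eK -c0 a0.
have h2 : K *m (S *m X) = A1 *m X by rewrite eK P1X.
have hSY : S *m Y = S *m X by rewrite -(mulKmx Ku (S *m Y)) h1 -h2 mulKmx.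
by rewrite -{1}P1X hS -!mulmxA -hSY !mulmxA -hS -mulmxA -/Y -c0.
Qed.
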